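(* There is an absolute constant $c>0$ such that for all integers $n>f\ge 1$ there exists an $n$-vertex graph $G^*=(V,E)$ such that every $f$-EFD connectivity certificate $H$ of $G^*$ has at least $c\, f n \log(n/f)$ edges.
   Context: For a graph $G=(V,E)$ and a set of edges $F\subseteq E$, $\deg(F)$ denotes the maximum over vertices $x$ of the number of edges of $F$ incident to $x$. A subgraph $H\subseteq G$ (on the same vertex set) is an $f$-EFD connectivity certificate of $G$ if for every $F\subseteq E$ with $\deg(F)\le f$ and every pair $u,v\in V$, $u$ and $v$ are connected in $H-F$ if and only if they are connected in $G-F$ (where $G-F$ is $G$ with the edges of $F$ removed). *)

(* Defs.v *)
From mathcomp Require Import all_boot.
From Stdlib Require Import Reals.
Set Implicit Arguments. Unset Strict Implicit. Unset Printing Implicit Defensive.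

Definition simple_graph (n : nat) (E : {set {set 'I_n}}) : Prop :=
  forall e, e \in E -> #|e| = 2.

Definition degF (n : nat) (F : {set {set 'I_n}}) : nat :=
  \max_(x : 'I_n) #|[set e in F | x \in e]|.

Definition adj_minus (n : nat) (E F : {set {set 'I_n}}) : rel 'I_n :=
  fun x y => [set x; y] \in E :\: F.

Definition connected_minus (n : nat) (E F : {set {set 'I_n}}) (u v : 'I_n) : bool :=
  connect (adj_minus E F) u v.

Definition EFD_certificate (n f : nat) (E H : {set {set 'I_n}}) : Prop :=
  H \subset E /\
  forall F : {set {set 'I_n}}, F \subset E -> degF F <= f ->
    forall u v : 'I_n, connected_minus H F u v = connected_minus E F u v.

(* Main.v *)
Require Import Defs.
From mathcomp Require Import all_boot.
From Stdlib Require Import Reals.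
Set Implicit Arguments. Unset Strict Implicit. Unset Printing Implicit Defensive.

Section Constr.
Variables (n f d k : nat).
Hypotheses (hk : (0 < k)%N) (hkf : (k <= f)%N) (hn : (expn 2 d * k <= n)%N).

Definition T := ({ffun 'I_d -> bool} * 'I_k)%type.

Lemma cardT : #|{: T}| = (expn 2 d * k)%N.
Proof. rewrite /T card_prod card_ffun card_bool !card_ord //. Qed.

Lemma leTn : (#|{: T}| <= n)%N.
Proof. by rewrite cardT. Qed.

Definition phi (x : T) : 'I_n := widen_ord leTn (enum_rank x).

Lemma phi_inj : injective phi.
Proof.
move=> x y /(congr1 val) /= /val_inj /enum_rank_inj //.
Qed.

Definition flip (i : 'I_d) (t : {ffun 'I_d -> bool}) : {ffun 'I_d -> bool} :=
  [ffun j => if j == i then ~~ t j else t j].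

Lemma flipK i : involutive (flip i).
Proof.
move=> t; apply/ffunP => j; rewrite !ffunE; case: eqP => // ->; by rewrite negbK.
Qed.

Lemma flip_i i t : flip i t i = ~~ t i.
Proof. by rewrite ffunE eqxx. Qed.

Lemma flip_j i j t : j != i -> flip i t j = t j.
Proof. by rewrite ffunE => /negPf ->. Qed.

Definition Dom := ('I_d * {ffun 'I_d -> bool} * 'I_k * 'I_k)%type.

Definition g (x : Dom) : {set 'I_n} :=
  let: (i, t, a, b) := x in [set phi (t, a); phi (flip i t, b)].

Definition D : {set Dom} := [set x : Dom | ~~ x.1.1.2 x.1.1.1].

Definition E : {set {set 'I_n}} := g @: D.

Definition classI (i : 'I_d) : {set {set 'I_n}} := g @: [set x in D | x.1.1.1 == i].

Lemma g_card2 x : #|g x| = 2.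
Proof.
case: x => [[[i t] a] b] /=; rewrite cards2.
case: eqP => // /phi_inj [] /(congr1 (fun h : {ffun 'I_d -> bool} => h i)); rewrite flip_i.
by case: (t i).
Qed.

Lemma E_simple : simple_graph E.
Proof. by move=> e /imsetP [x _ ->]; apply: g_card2. Qed.

Lemma g_inj : {in D &, injective g}.
Proof.
move=> [[[i t] a] b] [[[i' t'] a'] b']; rewrite !inE /= => ti ti' /setP eq.
have h1 := eq (phi (t, a)); have h2 := eq (phi (flip i t, b)).
rewrite !inE !eqxx /= orbT in h1 h2.
case/orP: (esym h1) => /eqP /phi_inj [et ea].
- subst t' a'.
  case/orP: (esym h2) => /eqP /phi_inj [ef eb].
  + move: (congr1 (fun h : {ffun 'I_d -> bool} => h i) ef); rewrite flip_i.
    by rewrite (negPf ti).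
  + subst b'.
    case: (eqVneq i i') => [-> //|nii].
    move: (congr1 (fun h : {ffun 'I_d -> bool} => h i') ef); rewrite flip_i flip_j 1?eq_sym //.
    by case: (t i').
-
  exfalso.
  have ei := congr1 (fun h : {ffun 'I_d -> bool} => h i) et.
  have ei' := congr1 (fun h : {ffun 'I_d -> bool} => h i') et.
  case/orP: (esym h2) => /eqP /phi_inj [ef eb].
  + have fi := congr1 (fun h : {ffun 'I_d -> bool} => h i) ef.
    have fi' := congr1 (fun h : {ffun 'I_d -> bool} => h i') ef.
    move: ei ei' fi fi' ti ti'; rewrite /= !ffunE !eqxx.
    case: (eqVneq i' i) => [->|nii]; rewrite ?eqxx //=.
    * by case: (t i); case: (t' i).
    * by rewrite ?(negPf nii) 1?eq_sym ?(negPf nii); case: (t i); case: (t' i); case: (t i'); case: (t' i').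
  + have fi := congr1 (fun h : {ffun 'I_d -> bool} => h i) ef.
    have fi' := congr1 (fun h : {ffun 'I_d -> bool} => h i') ef.
    move: ei ei' fi fi' ti ti'; rewrite /= !ffunE !eqxx.
    case: (eqVneq i' i) => [->|nii]; rewrite ?eqxx //=.
    * by case: (t i); case: (t' i).
    * by rewrite ?(negPf nii) 1?eq_sym ?(negPf nii); case: (t i); case: (t' i); case: (t i'); case: (t' i').
Qed.

Definition tog (x : Dom) : Dom := let: (i, t, a, b) := x in (i, flip i t, a, b).

Lemma tog_inj : injective tog.
Proof.
move=> [[[i t] a] b] [[[i' t'] a'] b'] /= [ei et ea eb]; subst i' a' b'.
by rewrite -(flipK i t) et flipK.
Qed.

Lemma cardD : (#|{: Dom}| <= 2 * #|D|)%N.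
Proof.
rewrite -(cardsC D) mul2n -addnn leq_add2l.
rewrite -(card_imset _ tog_inj); apply: subset_leq_card.
apply/subsetP => y /imsetP [[[[i t] a] b] xin ->]; move: xin.
by rewrite !inE /= flip_i negbK.
Qed.

Lemma cardDom : #|{: Dom}| = (d * expn 2 d * k * k)%N.
Proof. by rewrite !card_prod card_ffun card_bool !card_ord. Qed.

Lemma cardE : #|E| = #|D|.
Proof. by rewrite card_in_imset //; apply: g_inj. Qed.

Definition P (i : 'I_d) (z : 'I_n) : bool := [exists y : T, (phi y == z) && y.1 i].

Lemma P_phi i y : P i (phi y) = y.1 i.
Proof.
apply/existsP/idP => [[y' /andP [/eqP /phi_inj -> //]]|h].
by exists y; rewrite eqxx.
Qed.

Lemma P_edge i x z : x.1.1.1 != i -> z \in g x -> P i z = x.1.1.2 i.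
Proof.
case: x => [[[j t] a] b] /= nji; rewrite !inE => /orP [] /eqP ->; rewrite P_phi //=.
by rewrite flip_j // eq_sym.
Qed.

Lemma deg_class i z : (#|[set e in classI i | z \in e]| <= k)%N.
Proof.
case: (pickP (fun y : T => phi y == z)) => [[s a0] /eqP ez|none].
- apply: (@leq_trans #|[set [set z; phi (flip i s, b)] | b : 'I_k]|).
    apply: subset_leq_card; apply/subsetP => e; rewrite !inE.
    case/andP=> /imsetP [[[[j t] a] b] xin ->]; move: xin; rewrite !inE /= => /andP [ti /eqP ej].
    subst j => /orP [] /eqP; rewrite -ez => /phi_inj [et ea].
    + by subst; apply/imsetP; exists b.
    + subst; apply/imsetP; exists a => //; by rewrite flipK setUC.
  by apply: leq_trans (leq_imset_card _ _) _; rewrite card_ord.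
- rewrite (_ : [set e in classI i | z \in e] = set0) ?cards0 //.
  apply/setP => e; rewrite !inE.
  apply/negbTE; apply/negP => /andP [/imsetP [[[[j t] a] b] _ ->]].
  by rewrite /= !inE => /orP [] /eqP ez; move: (none (t, a)) (none (flip j t, b)); rewrite -ez eqxx.
Qed.

Lemma connect_inv (r : rel 'I_n) (Q : 'I_n -> bool) y z :
  (forall a b, r a b -> Q a = Q b) -> connect r y z -> Q y = Q z.
Proof.
move=> hr /connectP [p pth ->]; elim: p y pth => //= w p IH y /andP [rw pw].
by rewrite (hr _ _ rw) (IH _ pw).
Qed.

Lemma cert_full H : EFD_certificate f E H -> E \subset H.
Proof.
move=> [sHE hc]; apply/subsetP => e eE; apply/negPn/negP => eH.
case/imsetP: (eE) => x xD ex.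
move: xD ex; case: x => [[[i t] a] b] xD ex.
set F := classI i :\ e.
have FE : F \subset E.
  apply/subsetP => e' /setD1P [_ /imsetP [x' x'in ->]]; apply/imsetP; exists x' => //.
  by move: x'in; rewrite inE => /andP [].
have degFF : (degF F <= f)%N.
  apply/bigmax_leqP => z _; apply: leq_trans hkf.
  apply: leq_trans (deg_class i z); apply: subset_leq_card.
  by apply/subsetP => e'; rewrite !inE => /andP [/andP [_ ->] ->].
have := hc F FE degFF (phi (t, a)) (phi (flip i t, b)).
have -> : connected_minus E F (phi (t, a)) (phi (flip i t, b)).
  apply: connect1; rewrite /adj_minus (_ : [set _; _] = e) /F; last by rewrite ex.
  by rewrite in_setD in_setD1 eqxx /= eE.
move/connect_inv => /(_ (P i)).
rewrite !P_phi /= flip_i; move: xD; rewrite inE /= => /negPf -> /=.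
move=> h; suff : false = true by [].
apply: h => y z; rewrite /adj_minus !inE => /andP [nF yzH].
have := subsetP sHE _ yzH => /imsetP [x' x'D exx].
case: (eqVneq x'.1.1.1 i) => [ei|nei].
  exfalso; move: nF; rewrite negb_and negbK => /orP [/eqP eyz|].
    by move: eH; rewrite -eyz yzH.
  by rewrite exx; move/negP; apply; apply/imsetP; exists x' => //; rewrite inE x'D ei eqxx.
rewrite (P_edge nei (_ : y \in g x')) ?(P_edge nei (_ : z \in g x')) //.
  by rewrite -exx !inE eqxx orbT.
by rewrite -exx !inE eqxx.
Qed.

Lemma main_comb H : EFD_certificate f E H -> (d * expn 2 d * k * k <= 2 * #|H|)%N.
Proof.
move=> hc; rewrite -cardDom; apply: leq_trans cardD _.
by rewrite leq_mul2l -cardE subset_leq_card // cert_full.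
Qed.

End Constr.

From Stdlib Require Import Lra Psatz.
From mathcomp Require Import zify.

Lemma INR_leq (a b : nat) : (a <= b)%N -> (INR a <= INR b)%R.
Proof. by move/leP; apply: le_INR. Qed.

Lemma INR_ltn (a b : nat) : (a < b)%N -> (INR a < INR b)%R.
Proof. by move/ltP; apply: lt_INR. Qed.

Lemma INR_muln (a b : nat) : INR (a * b)%N = (INR a * INR b)%R.
Proof. exact: mult_INR. Qed.

Lemma INR_expn2 (d : nat) : INR (expn 2 d) = (2 ^ d)%R.
Proof.
elim: d => [|d IH]; first by rewrite expn0.
by rewrite expnS INR_muln IH /=.
Qed.

Lemma ln2_lt1 : (ln 2 < 1)%R.
Proof.
rewrite -[X in (_ < X)%R](ln_exp 1); apply: ln_increasing; first lra.
have := exp_ineq1 1; lra.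
Qed.

Lemma ln_bound (n f d : nat) : (0 < f)%N -> (f < n)%N ->
  (INR n < 2 ^ d.+1 * INR f)%R -> (0 < ln (INR n / INR f) < INR d.+1)%R.
Proof.
move=> f0 fn hn.
have f0' : (0 < INR f)%R by apply: (INR_ltn f0).
have fn' : (INR f < INR n)%R by apply: INR_ltn.
have p2 : (0 < 2 ^ d.+1)%R by apply: pow_lt; lra.
split.
  rewrite -ln_1; apply: ln_increasing; first lra.
  have -> : (INR n / INR f = 1 + (INR n - INR f) / INR f)%R by field; lra.
  have := Rdiv_lt_0_compat (INR n - INR f) (INR f); lra.
apply: (Rlt_le_trans _ (ln (2 ^ d.+1))).
  apply: ln_increasing; first by apply: Rdiv_lt_0_compat; lra.
  have -> : (INR n / INR f = 2 ^ d.+1 - (2 ^ d.+1 * INR f - INR n) / INR f)%R by field; lra.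
  have := Rdiv_lt_0_compat (2 ^ d.+1 * INR f - INR n) (INR f); lra.
rewrite ln_pow; last lra.
have := ln2_lt1; have := ln_lt_2; have := pos_INR d.+1; nra.
Qed.

Theorem mainTheorem2 :
  exists c : R, (0 < c)%R /\
    forall n f : nat, (1 <= f)%N -> (f < n)%N ->
      exists E : {set {set 'I_n}}, simple_graph E /\
        forall H : {set {set 'I_n}}, EFD_certificate f E H ->
          (c * INR f * INR n * ln (INR n / INR f) <= INR #|H|)%R.
Proof.
exists (1/16)%R; split; first lra.
move=> n f hf hfn.
have f0' : (0 < INR f)%R by apply: (INR_ltn hf).
have fn' : (INR f < INR n)%R by apply: INR_ltn.
case: (leqP (2 * f) n) => h2.
- set m := n %/ f.
  have m2 : (2 <= m)%N by rewrite leq_divRL.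
  set d := trunc_log 2 m.
  have d1 : (0 < d)%N by rewrite trunc_log_gt0.
  have hn : (expn 2 d * f <= n)%N.
    apply: leq_trans (leq_trunc_div n f); rewrite leq_mul2r trunc_logP ?orbT //.
    exact: leq_trans m2.
  exists (E hn); split; first exact: E_simple.
  move=> H /(main_comb (leqnn f)) hc.
  have hc' := INR_leq hc; rewrite !INR_muln INR_expn2 in hc'.
  have hn2 : (n < expn 2 d.+1 * f)%N.
    apply: leq_trans (ltn_ceil n hf) _; rewrite leq_mul2r trunc_log_ltn ?orbT //.
  have hn2' := INR_ltn hn2; rewrite INR_muln INR_expn2 in hn2'.
  have [L0 L1] := ln_bound (d:=d) hf hfn hn2'.
  have dd : (1 <= INR d)%R by apply: (INR_leq d1).
  rewrite S_INR in L1.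
  rewrite /= in hn2'.
  set L := ln _ in L0 L1 *.
  set X := (2 ^ d)%R in hc' hn2' *.
  have X0 : (0 < X)%R by apply: pow_lt; lra.
  have e1 : (INR f * INR n * L <= INR f * (2 * X * INR f) * (2 * INR d))%R.
    have hfn2 : (INR f * INR n <= INR f * (2 * X * INR f))%R by apply: Rmult_le_compat_l; lra.
    apply: Rmult_le_compat; nra.
  have h2R : INR 2 = 2%R by rewrite /=; lra.
  rewrite h2R in hc'.
  have hH : (0 <= INR #|H|)%R by apply: pos_INR.
  lra.
- set k := n./2.
  have n2 : (2 <= n)%N by apply: leq_ltn_trans hfn.
  have k0 : (0 < k)%N by rewrite /k -divn2 divn_gt0.
  have kf : (k <= f)%N.
    rewrite /k -divn2 -ltnS ltn_divLR //.
    by apply: leq_trans h2 _; rewrite (mulnC f.+1) leq_mul2l leqnSn orbT.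
  have hn : (expn 2 1 * k <= n)%N by rewrite expn1 mul2n -[X in (_ <= X)%N]odd_double_half leq_addl.
  exists (E hn); split; first exact: E_simple.
  move=> H /(main_comb kf) hc.
  have hc' := INR_leq hc; rewrite !INR_muln INR_expn2 /= in hc'.
  have h3 : (n <= 3 * k)%N.
    have : (n <= k.*2 + 1)%N.
      rewrite -{1}(odd_double_half n) addnC -/k; have := leq_b1 (odd n); lia.
    lia.
  have h3' := INR_leq h3; rewrite INR_muln /= in h3'.
  have hn2' : (INR n < 2 ^ 1 * INR f)%R by rewrite /=; have := INR_ltn h2; rewrite INR_muln /=; lra.
  have [L0 L1] := ln_bound (d:=0) hf hfn hn2'.
  rewrite /= in L1.
  set L := ln _ in L0 L1 *.
  have e1 : (INR f * INR n * L <= INR n * INR n)%R.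
    have : (INR f * INR n * L <= INR f * INR n * 1)%R by apply: Rmult_le_compat_l; nra.
    nra.
  have k0' : (0 <= INR k)%R by apply: pos_INR.
  have nn : (INR n * INR n <= 9 * (INR k * INR k))%R.
    have n0 : (0 <= INR n)%R by apply: pos_INR.
    have := Rmult_le_compat _ _ _ _ n0 n0 h3' h3'; lra.
  have hcc : (INR k * INR k <= INR #|H|)%R.
    move: hc'; rewrite /=; lra.
  have := Rmult_le_pos _ _ k0' k0'; lra.
Qed.
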